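(* Let $n\ge 5$ and let $G$ be a tree on $n$ vertices with $G\not\cong P_n$. Then $\mathrm{irr}_t(G)\ge 4n-10$. Equality holds if and only if the degree sequence of $G$ is $(3,2,\ldots,2,1,1,1)$, i.e. $G$ has exactly one vertex of degree $3$, exactly $n-4$ vertices of degree $2$ and exactly $3$ vertices of degree $1$.
   Context: For a graph $G=(V,E)$ and $w\in V$, $d_G(w)$ is the degree of $w$. The total irregularity is $\mathrm{irr}_t(G)=\frac12\sum_{x,y\in V}|d_G(x)-d_G(y)|$, where the sum runs over all ordered pairs of vertices. $P_n$ is the path on $n$ vertices. Degree sequences are listed in nonincreasing order. *)

(* Defs.v *)
From mathcomp Require Import all_boot.
Set Implicit Arguments. Unset Strict Implicit. Unset Printing Implicit Defensive.

Definition simple_graph n (e : rel 'I_n) : Prop :=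
  irreflexive e /\ symmetric e.

Definition deg n (e : rel 'I_n) (w : 'I_n) : nat := #|[set y | e w y]|.

Definition nedges n (e : rel 'I_n) : nat :=
  #|[set p : 'I_n * 'I_n | (p.1 < p.2) && e p.1 p.2]|.

Definition connected_graph n (e : rel 'I_n) : Prop :=
  forall x y : 'I_n, connect e x y.

Definition is_tree n (e : rel 'I_n) : Prop :=
  simple_graph e /\ connected_graph e /\ nedges e = n.-1.

Definition path_rel n : rel 'I_n := fun i j => (i.+1 == j) || (j.+1 == i).

Definition isomorphic n (e1 e2 : rel 'I_n) : Prop :=
  exists f : 'I_n -> 'I_n, bijective f /\ forall x y, e1 x y = e2 (f x) (f y).

Definition natdist (a b : nat) : nat := (a - b) + (b - a).

(* total irregularity: (1/2) sum over ordered pairs |d(x) - d(y)|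
   (the double sum is always even, so nat division is exact) *)
Definition irr_t n (e : rel 'I_n) : nat :=
  (\sum_(x : 'I_n) \sum_(y : 'I_n) natdist (deg e x) (deg e y)) %/ 2.

Definition ndeg n (e : rel 'I_n) (k : nat) : nat := #|[set w | deg e w == k]|.

(* Main.v *)
Require Import Defs.
From mathcomp Require Import all_boot zify.
Set Implicit Arguments. Unset Strict Implicit. Unset Printing Implicit Defensive.

Lemma card_set_sum (T : finType) (P : pred T) : #|[set x | P x]| = \sum_x P x.
Proof. by rewrite -sum1dep_card big_mkcond /=; apply: eq_bigr => x _; case: (P x). Qed.

Lemma handshake n (e : rel 'I_n) : simple_graph e ->
  \sum_x deg e x = 2 * nedges e.
Proof.
move=> [irr sym].
rewrite /nedges card_set_sum /deg.
under eq_bigr do rewrite card_set_sum.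
rewrite -(pair_big predT predT (fun x y : 'I_n => ((x < y) && e x y) : nat)) /=.
have -> : \sum_x \sum_y (e x y : nat) =
   \sum_(x : 'I_n) \sum_(y : 'I_n) (((x < y) && e x y) : nat) + \sum_(x : 'I_n) \sum_(y : 'I_n) (((y < x) && e x y) : nat).
  rewrite -big_split /=; apply: eq_bigr => x _; rewrite -big_split /=.
  apply: eq_bigr => y _.
  case: (ltngtP x y) => [h|h|h] /=; rewrite ?addn0 //.
  have -> : x = y by apply: val_inj; exact: h.
  by rewrite irr.
rewrite [X in _ + X]exchange_big /=.
have -> : \sum_(y : 'I_n) \sum_(x : 'I_n) (((y < x) && e x y) : nat) = \sum_(x : 'I_n) \sum_(y : 'I_n) (((x < y) && e x y) : nat).
  by apply: eq_bigr => x _; apply: eq_bigr => y _; rewrite sym.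
by rewrite addnn -mul2n.
Qed.

Lemma deg_pos n (e : rel 'I_n) : connected_graph e -> 1 < n -> forall x, 0 < deg e x.
Proof.
move=> con n1 x.
have [y hy] : exists y : 'I_n, y != x.
  case: (x =P Ordinal n1) => [->|h].
  - have h0 : 0 < n by lia.
    by exists (Ordinal h0).
  - by exists (Ordinal n1); apply/eqP=> h'; apply: h.
case/connectP: (con x y) => [[|z p]] /= => [_ yx|/andP [exz _] _].
  by rewrite yx eqxx in hy.
by apply/card_gt0P; exists z; rewrite inE.
Qed.

Lemma size_sub_card (T : finType) (A : {set T}) (s : seq T) :
  uniq s -> {subset s <= A} -> size s <= #|A|.
Proof.
move=> u sub; rewrite cardE; apply: uniq_leq_size u _ => x /sub.
by rewrite mem_enum.
Qed.

Lemma nbrs (T : finType) (e : rel T) (v0 : T) (t : seq T) i z :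
  symmetric e -> (forall x, #|[set y | e x y]| <= 2) -> #|[set y | e v0 y]| = 1 ->
  uniq (v0 :: t) -> path e v0 t -> i.+1 < size (v0 :: t) ->
  e (nth v0 (v0 :: t) i) z ->
  z = nth v0 (v0 :: t) i.+1 \/ (0 < i /\ z = nth v0 (v0 :: t) i.-1).
Proof.
set s := v0 :: t => sym hd h1 u p hi hz.
have step : forall j, j.+1 < size s -> e (nth v0 s j) (nth v0 s j.+1).
  by move=> j hj; apply: (pathP v0 p); rewrite /s /= in hj.
case: (z =P nth v0 s i.+1) => [->|hne]; [by left|right].
case: i hi hz hne => [|i] hi hz hne.
- exfalso.
  have := @size_sub_card _ [set y | e v0 y] [:: nth v0 s 1; z].
  rewrite h1 /= inE andbT => H.
  have : 2 <= 1.
    apply: H.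
      by apply/eqP => h; apply: hne; rewrite -h.
    move=> w; rewrite !inE => /orP [] /eqP ->; rewrite ?inE //.
    exact: (step 0 hi).
  by [].
- split => //=.
  case: (z =P nth v0 s i) => // hne2; exfalso.
  have := @size_sub_card _ [set y | e (nth v0 s i.+1) y] [:: nth v0 s i; nth v0 s i.+2; z].
  have hs1 : i < size s by lia.
  have hs2 : i.+2 < size s by lia.
  move=> H; have : 3 <= 2; last by [].
  apply: leq_trans (hd _).
  apply: H.
    have n1 : (nth v0 s i == z) = false by apply/eqP => h; apply: hne2; rewrite -h.
    have n2 : (nth v0 s i.+2 == z) = false by apply/eqP => h; apply: hne; rewrite -h.
    have n3 : (nth v0 s i == nth v0 s i.+2) = false by rewrite nth_uniq //; lia.
    rewrite /= !inE n1 n2 n3 //.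
  move=> w; rewrite !inE => /or3P [] /eqP ->; rewrite ?inE //.
  - by rewrite sym; apply: step; lia.
  - by apply: step.
Qed.

Fixpoint walk n (e : rel 'I_n) (v0 : 'I_n) (k : nat) : seq 'I_n :=
  match k with
  | 0 => [::]
  | k'.+1 => let t := walk e v0 k' in
     if [pick y | e (last v0 t) y && (y \notin v0 :: t)] is Some y then rcons t y else t
  end.

Lemma walk_inv n (e : rel 'I_n) v0 k :
  uniq (v0 :: walk e v0 k) && path e v0 (walk e v0 k).
Proof.
elim: k => [|k /andP [u p]] //=.
case: pickP => [y /andP [h1 h2]|_]; last by apply/andP.
have U : uniq (rcons (v0 :: walk e v0 k) y) by rewrite rcons_uniq h2 u.
by rewrite rcons_path p h1 !andbT.
Qed.

Lemma walk_size n (e : rel 'I_n) v0 :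
  simple_graph e -> connected_graph e -> (forall x, deg e x <= 2) -> deg e v0 = 1 ->
  forall k, k < n -> size (walk e v0 k) = k.
Proof.
move=> [irr sym] con hd h1.
elim => [|k IH] hk //=.
have := walk_inv e v0 k; set t := walk e v0 k => /andP [u p].
case: pickP => [y _|nop]; first by rewrite size_rcons IH //; lia.
exfalso.
have cl : closed e (mem (v0 :: t)).
  suff H : forall x y, e x y -> x \in v0 :: t -> y \in v0 :: t.
    move=> x y exy /=; apply/idP/idP; first exact: H.
    by apply: H; rewrite sym.
  move=> x y exy xin.
  have hi := index_mem x (v0 :: t); rewrite xin in hi.
  have hx := nth_index v0 xin.
  case: (ltnP (index x (v0 :: t)).+1 (size (v0 :: t))) => hlt.
  - rewrite -hx in exy.
    case: (nbrs sym hd h1 u p hlt exy) => [->|[_ ->]]; apply: mem_nth => //.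
    by apply: leq_ltn_trans (leq_pred _) _; rewrite hi.
  - have hl : x = last v0 t.
      have hi' : index x (v0 :: t) < size (v0 :: t) by rewrite hi.
      move: hi' hlt hx; set i := index x _; set m := size _ => hi' hlt hx.
      rewrite -hx; have -> : i = m.-1 by lia.
      by rewrite /m nth_last.
    have := nop y; rewrite /= -hl exy /=.
    by move/negbFE.
have all_in : forall y, y \in v0 :: t.
  move=> y; have := closed_connect cl (con v0 y).
  by rewrite /= mem_head => <-.
have := @uniq_leq_size _ (enum 'I_n) (v0 :: t) (enum_uniq _) (fun y _ => all_in y).
rewrite size_enum_ord /= IH; lia.
Qed.

Lemma path_iso n (e : rel 'I_n) v0 :
  simple_graph e -> connected_graph e -> (forall x, deg e x <= 2) -> deg e v0 = 1 ->
  isomorphic e (@path_rel n).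
Proof.
move=> sg con hd h1; have [irr sym] := sg.
have n0 : 0 < n by have := ltn_ord v0; lia.
have /andP [u p] := walk_inv e v0 n.-1.
have ht := walk_size sg con hd h1 (n := n).
move: u p; set t := walk e v0 n.-1 => u p.
have hs : size (v0 :: t) = n by rewrite /= ht; lia.
have step : forall j, j.+1 < size (v0 :: t) -> e (nth v0 (v0 :: t) j) (nth v0 (v0 :: t) j.+1).
  by move=> j hj; apply: (pathP v0 p); rewrite /= in hj.
have chord : forall a b : nat, b < n -> a.+1 < b ->
    e (nth v0 (v0 :: t) a) (nth v0 (v0 :: t) b) -> False.
  move=> a b hb hab hz.
  have ha : a.+1 < size (v0 :: t) by lia.
  case: (nbrs sym hd h1 u p ha hz) => [h|[_ h]]; move/eqP: h;
    rewrite nth_uniq // ?hs; try lia.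
pose g (i : 'I_n) := nth v0 (v0 :: t) i.
have key : forall i j : 'I_n, e (g i) (g j) = path_rel i j.
  move=> i j; rewrite /path_rel /g.
  case: eqP => [h|h] /=.
    by rewrite -h; apply: step; rewrite hs h.
  case: eqP => [h2|h2].
    by rewrite sym -h2; apply: step; rewrite hs h2.
  apply/negbTE/negP => hz.
  case: (ltngtP i j) => hl.
  - by apply: (chord i j) => //; lia.
  - by rewrite sym in hz; apply: (chord j i) => //; lia.
  - have eij : i = j by apply: val_inj.
    by rewrite eij irr in hz.
have ginj : injective g.
  move=> i j /eqP; rewrite /g nth_uniq ?hs // => /eqP h; exact: val_inj.
case: (injF_bij ginj) => g' K1 K2.
exists g'; split; first by exists g.
by move=> x y; rewrite -key !K2.
Qed.

Lemma nd1 k : 0 < k -> natdist 1 k + 1 = k.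
Proof. rewrite /natdist; lia. Qed.
Lemma nd2 k : 0 < k -> natdist 2 k + 2 = k + 2 * (k == 1).
Proof. by case: k => [|[|k]] //= _; rewrite /natdist; lia. Qed.
Lemma ndk m k : 2 < m -> m * ((k == 1) + (k == 2)) <= natdist m k + (k == 1) + 2 * (k == 2).
Proof. by case: k => [|[|[|k]]] /= hm; rewrite /natdist; lia. Qed.
Lemma nd3 k : 0 < k -> k <= 3 -> natdist 3 k = 2 * (k == 1) + (k == 2).
Proof. by case: k => [|[|[|[|k]]]]. Qed.

Definition rowsum (T : finType) (d : T -> nat) x := \sum_y natdist (d x) (d y).

Lemma row1 (T : finType) (d : T -> nat) x : (forall y, 0 < d y) -> d x = 1 ->
  rowsum d x + #|T| = \sum_y d y.
Proof.
move=> hp hx; rewrite /rowsum hx -sum1_card -big_split /=.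
by apply: eq_bigr => y _; rewrite nd1.
Qed.

Lemma row2 (T : finType) (d : T -> nat) x : (forall y, 0 < d y) -> d x = 2 ->
  rowsum d x + 2 * #|T| = \sum_y d y + 2 * \sum_y (d y == 1).
Proof.
move=> hp hx; rewrite /rowsum hx -sum1_card !big_distrr -!big_split /=.
by apply: eq_bigr => y _; rewrite muln1 nd2.
Qed.

Lemma rowk (T : finType) (d : T -> nat) x : 2 < d x ->
  d x * (\sum_y (d y == 1) + \sum_y (d y == 2)) <=
  rowsum d x + \sum_y (d y == 1) + 2 * \sum_y (d y == 2).
Proof.
move=> hx; rewrite /rowsum -big_split big_distrr big_distrr -!big_split /=.
by apply: leq_sum => y _; apply: ndk.
Qed.

Lemma row3 (T : finType) (d : T -> nat) x : (forall y, 0 < d y) -> (forall y, d y <= 3) -> d x = 3 ->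
  rowsum d x = 2 * \sum_y (d y == 1) + \sum_y (d y == 2).
Proof.
move=> hp h3 hx; rewrite /rowsum hx big_distrr -big_split /=.
by apply: eq_bigr => y _; rewrite nd3.
Qed.
Lemma arith n L N2 H SD T : 5 <= n -> n = L+N2+H -> L + 2*N2 + SD + 2 = 2*n -> 3*H <= SD -> 1 <= H ->
  L*(n-2) + N2*(2*L) + SD*(L+N2) <= T + H*(L+2*N2) + N2*2 ->
  8*n-20 <= T /\ (T <= 8*n-19 -> H = 1 /\ SD = 3).
Proof.
move=> n5 hn hs h3 h1 hT.
have [S eSD] : exists S, SD = S + 2 * H by exists (SD - 2 * H); lia.
subst SD.
have eL : L = S + 2 by lia.
subst L n.
have hSH : H <= S by lia.
move: hT; rewrite (_ : S + 2 + N2 + H - 2 = S + N2 + H); last by lia.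
move=> hT.
case: (ltnP S 2) => hS.
- have eS : S = 1 by lia.
  have eH : H = 1 by lia.
  subst S H; split; [lia|lia].
- have [S' eS] : exists S', S = S'.+2 by exists (S - 2); lia.
  subst S.
  have : 8 * (S'.+2 + 2 + N2 + H) - 20 + 2 <= T by nia.
  lia.
Qed.

Lemma sum_ge (T : finType) (f : T -> nat) x : f x <= \sum_y f y.
Proof. by rewrite (bigD1 x) //=; apply: leq_addr. Qed.

Theorem theorem6 (n : nat) (e : rel 'I_n) :
  5 <= n -> is_tree e -> ~ isomorphic e (@path_rel n) ->
  4 * n - 10 <= irr_t e /\
  (irr_t e = 4 * n - 10 <->
   [/\ ndeg e 3 = 1, ndeg e 2 = n - 4 & ndeg e 1 = 3]).
Proof.
move=> n5 [sg [con ned]] noiso.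
have hpos := deg_pos con (ltac:(lia) : 1 < n).
have hsum : \sum_x deg e x + 2 = 2 * n by rewrite handshake // ned; lia.
have irrT : irr_t e = (\sum_x rowsum (deg e) x) %/ 2 by [].
rewrite irrT /ndeg !card_set_sum.
move: hpos hsum; set D := deg e => hpos hsum.
set T := \sum_x rowsum D x.
set L := \sum_x (D x == 1).
set N2 := \sum_x (D x == 2).
set H := \sum_x (2 < D x).
set SD := \sum_x ((2 < D x) * D x).
set A3 := \sum_x (D x == 3).
set B := \sum_x (3 < D x).
set C := \sum_x ((3 < D x) * D x).
have hn : n = L + N2 + H.
  rewrite -{1}(card_ord n) -sum1_card -!big_split /=.
  by apply: eq_bigr => x _; case: (D x) (hpos x) => [|[|[|m]]].
have hs : L + 2 * N2 + SD + 2 = 2 * n.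
  rewrite -hsum big_distrr -!big_split /=; congr (_ + _).
  by apply: eq_bigr => x _; case: (D x) (hpos x) => [|[|[|m]]] //= _; lia.
have h3 : 3 * H <= SD.
  rewrite big_distrr; apply: leq_sum => x _; case: (boolP (2 < D x)) => h /=; lia.
have hHB : H = A3 + B.
  rewrite -big_split; apply: eq_bigr => x _; case: (D x) => [|[|[|[|m]]]] //.
have hSDC : SD = 3 * A3 + C.
  rewrite big_distrr -big_split; apply: eq_bigr => x _; case: (D x) => [|[|[|[|m]]]] //.
have hBC : 4 * B <= C.
  rewrite big_distrr; apply: leq_sum => x _; case: (boolP (3 < D x)) => h /=; lia.
have h1 : 1 <= H.
  case: (boolP [exists x, 2 < D x]) => [/existsP [x0 hx0]|hno].
    by apply: leq_trans (sum_ge _ x0); rewrite hx0.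
  exfalso.
  have hd : forall x, deg e x <= 2.
    move=> x; rewrite leqNgt; apply/negP => hx; move/negP: hno; apply.
    by apply/existsP; exists x.
  case: (boolP [exists x, D x == 1]) => [/existsP [v0 /eqP hv0]|hno1].
    by apply: noiso; apply: (path_iso sg con hd hv0).
  have : \sum_x D x = \sum_(x : 'I_n) 2 * 1.
    apply: eq_bigr => x _; have := hd x; have := hpos x.
    have : D x != 1 by apply/negP => h; move/negP: hno1; apply; apply/existsP; exists x.
    rewrite /D; lia.
  rewrite -big_distrr sum1_card card_ord => h2.
  have h2' : \sum_x D x = 2 * n by rewrite h2.
  lia.
have hT : L * (n - 2) + N2 * (2 * L) + SD * (L + N2) <= T + H * (L + 2 * N2) + N2 * 2.
  have E1 : \sum_x ((D x == 1) * (n - 2) + (D x == 2) * (2 * L) + ((2 < D x) * D x) * (L + N2))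
      = L * (n - 2) + N2 * (2 * L) + SD * (L + N2) by rewrite !big_split /= -!big_distrl.
  have E2 : \sum_x (rowsum D x + (2 < D x) * (L + 2 * N2) + (D x == 2) * 2)
      = T + H * (L + 2 * N2) + N2 * 2 by rewrite !big_split /= -!big_distrl.
  rewrite -E1 -E2; apply: leq_sum => x _.
  have r1 := @row1 _ D x hpos; have r2 := @row2 _ D x hpos; have rk := @rowk _ D x.
  rewrite card_ord in r1 r2.
  rewrite -/L -/N2 in r2 rk.
  move: hsum r1 r2; set sD := \sum_x D x => hsum r1 r2.
  move: r1 r2 rk; case: (D x) (hpos x) => [|[|[|m]]] //= _ r1 r2 rk.
  - have := r1 erefl; lia.
  - have := r2 erefl; lia.
  - have := rk isT; lia.
have [lo eqc] := arith n5 hn hs h3 h1 hT.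
split; first lia.
split.
- move=> hq; have [eH eS] := eqc (ltac:(lia)).
  split; lia.
- move=> [e3 e2 e1].
  have hB0 : B = 0 by lia.
  have hle3 : forall x, D x <= 3.
    move=> x; have := sum_ge (fun y => (3 < D y) : nat) x; rewrite -/B hB0.
    by case: (3 < D x) (leqP (D x) 3) => // [] [].
  have eT : T = L * (n - 2) + N2 * (2 * L - 2) + A3 * (2 * L + N2).
    have E3 : \sum_x ((D x == 1) * (n - 2) + (D x == 2) * (2 * L - 2) + (D x == 3) * (2 * L + N2))
      = L * (n - 2) + N2 * (2 * L - 2) + A3 * (2 * L + N2) by rewrite !big_split /= -!big_distrl.
    rewrite -E3; apply: eq_bigr => x _.
    have r1 := @row1 _ D x hpos; have r2 := @row2 _ D x hpos; have r3 := @row3 _ D x hpos hle3.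
    rewrite card_ord in r1 r2.
    rewrite -/L -/N2 in r2 r3.
    move: hsum r1 r2; set sD := \sum_x D x => hsum r1 r2.
    move: r1 r2 r3 (hle3 x); case: (D x) (hpos x) => [|[|[|[|m]]]] //= _ r1 r2 r3 _.
    + have := r1 erefl; lia.
    + have := r2 erefl; lia.
    + have := r3 erefl; lia.
  rewrite eT e1 e2 e3; lia.
Qed.
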